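(* Let $K$ be an infinite field containing $\mathbb{F}_q$, let $B\in\mathrm{GL}_n(K)$, and let $N\in\mathrm{GL}_n(K)$ be such that $N^{-1}BN^{(q)}=\Delta$, where $\Delta$ is the matrix with $1$'s on the subdiagonal, last column $(a_0,a_1,\dots,a_{n-1})^T$ and all other entries $0$. Then the splitting fields over $K$ of the systems $BX^{(q)}=X$ and $\Delta^*X^{(q)}=X$ coincide, where $\Delta^*=(\Delta^{-1})^T$.
   Context: $X^{(q)}$, $N^{(q)}$ denote entrywise $q$-th powers. The splitting field over $K$ of $CX^{(q)}=X$ is the subfield of $K_{\mathrm{sep}}$ generated over $K$ by the coordinates of all its solutions in $K_{\mathrm{sep}}^n$. (Such $N$ exists since Frobenius modules over infinite fields are cyclic.) *)

(* Defs.v *)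
From HB Require Import structures.
From mathcomp Require Import all_boot all_order all_algebra all_field.
Set Implicit Arguments. Unset Strict Implicit. Unset Printing Implicit Defensive.
Import GRing.Theory.
Local Open Scope ring_scope.

Definition frobmx (R : nzRingType) (q m n : nat) (M : 'M[R]_(m, n)) : 'M[R]_(m, n) :=
  map_mx (fun x => x ^+ q) M.

Definition Delta (R : nzRingType) (n : nat) (a : 'I_n -> R) : 'M[R]_n :=
  \matrix_(i < n, j < n)
    (if (j.+1 == n)%N then a i else if (i == j.+1 :> nat) then 1 else 0).

Definition Delta_star (K : fieldType) (n : nat) (a : 'I_n -> K) : 'M[K]_n :=
  (invmx (Delta a))^T.

Definition is_sep_closure (K L : fieldType) (iota : {rmorphism K -> L}) : Prop :=
  (forall x : L, exists p : {poly K},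
      p != 0 /\ separable_poly p /\ root (map_poly iota p) x) /\
  (forall p : {poly L}, separable_poly p -> (1 < size p)%N -> exists x, root p x).

Definition gen_subfield (K L : fieldType) (iota : {rmorphism K -> L})
    (S : L -> Prop) : L -> Prop :=
  fun x => forall P : L -> Prop,
    (forall k, P (iota k)) -> (forall s, S s -> P s) ->
    (forall u v, P u -> P v -> P (u - v)) ->
    (forall u v, P u -> P v -> P (u * v)) ->
    (forall u, P u -> P u^-1) -> P x.

Definition sol_coords (K L : fieldType) (iota : {rmorphism K -> L}) (q n : nat)
    (C : 'M[K]_n) : L -> Prop :=
  fun s => exists X : 'cV[L]_n,
    map_mx iota C *m frobmx q X = X /\ exists i, X i 0 = s.

Definition splitting_field_sys (K L : fieldType) (iota : {rmorphism K -> L})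
    (q n : nat) (C : 'M[K]_n) : L -> Prop :=
  gen_subfield iota (sol_coords iota q C).

(* Main.v *)
Require Import Defs.
From HB Require Import structures.
From mathcomp Require Import all_boot all_order all_algebra all_field all_fingroup all_solvable.
Import GRing.Theory.
Local Open Scope ring_scope.
Section GenLemmas.
End GenLemmas.

Lemma gen_base (K L : fieldType) (iota : {rmorphism K -> L}) (T : L -> Prop) s :
  T s -> gen_subfield iota T s.
Proof. by move=> Ts P _ HT _ _ _; apply: HT. Qed.
Lemma gen_K (K L : fieldType) (iota : {rmorphism K -> L}) (T : L -> Prop) k :
  gen_subfield iota T (iota k).
Proof. by move=> P HK _ _ _ _; apply: HK. Qed.
Lemma gen_B (K L : fieldType) (iota : {rmorphism K -> L}) (T : L -> Prop) u v :
  gen_subfield iota T u -> gen_subfield iota T v -> gen_subfield iota T (u - v).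
Proof. move=> Hu Hv P HK HT Hsb HM HV; apply: (Hsb). exact: (Hu P HK HT Hsb HM HV). exact: (Hv P HK HT Hsb HM HV). Qed.
Lemma gen_M (K L : fieldType) (iota : {rmorphism K -> L}) (T : L -> Prop) u v :
  gen_subfield iota T u -> gen_subfield iota T v -> gen_subfield iota T (u * v).
Proof. move=> Hu Hv P HK HT Hsb HM HV; apply: (HM). exact: (Hu P HK HT Hsb HM HV). exact: (Hv P HK HT Hsb HM HV). Qed.
Lemma gen_V (K L : fieldType) (iota : {rmorphism K -> L}) (T : L -> Prop) u :
  gen_subfield iota T u -> gen_subfield iota T (u^-1).
Proof. by move=> Hu P HK HT Hsb HM HV; apply: (HV); exact: (Hu P HK HT Hsb HM HV). Qed.
Lemma gen_0 (K L : fieldType) (iota : {rmorphism K -> L}) (T : L -> Prop) :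
  gen_subfield iota T 0.
Proof. by rewrite -(rmorph0 iota); apply: gen_K. Qed.
Lemma gen_1 (K L : fieldType) (iota : {rmorphism K -> L}) (T : L -> Prop) :
  gen_subfield iota T 1.
Proof. by rewrite -(rmorph1 iota); apply: gen_K. Qed.
Lemma gen_N (K L : fieldType) (iota : {rmorphism K -> L}) (T : L -> Prop) u :
  gen_subfield iota T u -> gen_subfield iota T (- u).
Proof. by move=> Hu; rewrite -sub0r; apply: gen_B => //; apply: gen_0. Qed.
Lemma gen_D (K L : fieldType) (iota : {rmorphism K -> L}) (T : L -> Prop) u v :
  gen_subfield iota T u -> gen_subfield iota T v -> gen_subfield iota T (u + v).
Proof. by move=> Hu Hv; rewrite -[v]opprK; apply: gen_B => //; apply: gen_N. Qed.
Lemma gen_sum (K L : fieldType) (iota : {rmorphism K -> L}) (T : L -> Prop)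
   (I : Type) (r : seq I) (P : pred I) (F : I -> L) :
  (forall i, P i -> gen_subfield iota T (F i)) -> gen_subfield iota T (\sum_(i <- r | P i) F i).
Proof. move=> H; apply: big_ind => //; [exact: gen_0 | exact: gen_D]. Qed.
Lemma gen_prod (K L : fieldType) (iota : {rmorphism K -> L}) (T : L -> Prop)
   (I : Type) (r : seq I) (P : pred I) (F : I -> L) :
  (forall i, P i -> gen_subfield iota T (F i)) -> gen_subfield iota T (\prod_(i <- r | P i) F i).
Proof. move=> H; apply: big_ind => //; [exact: gen_1 | exact: gen_M]. Qed.
Lemma gen_X (K L : fieldType) (iota : {rmorphism K -> L}) (T : L -> Prop) u k :
  gen_subfield iota T u -> gen_subfield iota T (u ^+ k).
Proof. by move=> Hu; elim: k => [|k IH]; [rewrite expr0; apply: gen_1 | rewrite exprS; apply: gen_M]. Qed.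
Lemma gen_sub (K L : fieldType) (iota : {rmorphism K -> L}) (T1 T2 : L -> Prop) :
  (forall s, T1 s -> gen_subfield iota T2 s) ->
  forall x, gen_subfield iota T1 x -> gen_subfield iota T2 x.
Proof.
move=> H x Hx; apply: Hx; [exact: gen_K | exact: H | exact: gen_B | exact: gen_M | exact: gen_V].
Qed.

Definition mxin (K L : fieldType) (iota : {rmorphism K -> L}) (T : L -> Prop) m n
  (M : 'M[L]_(m, n)) := forall i j, gen_subfield iota T (M i j).
Arguments mxin {K L} iota T {m n} M.

Lemma mxin_map (K L : fieldType) (iota : {rmorphism K -> L}) (T : L -> Prop) m n
  (M : 'M[K]_(m, n)) : mxin iota T (map_mx iota M).
Proof. by move=> i j; rewrite mxE; apply: gen_K. Qed.
Lemma mxin_mul (K L : fieldType) (iota : {rmorphism K -> L}) (T : L -> Prop) m n p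
  (M : 'M[L]_(m, n)) (M' : 'M[L]_(n, p)) : mxin iota T M -> mxin iota T M' -> mxin iota T (M *m M').
Proof. by move=> H1 H2 i j; rewrite mxE; apply: gen_sum => k _; apply: gen_M. Qed.
Lemma mxin_tr (K L : fieldType) (iota : {rmorphism K -> L}) (T : L -> Prop) m n
  (M : 'M[L]_(m, n)) : mxin iota T M -> mxin iota T M^T.
Proof. by move=> H i j; rewrite mxE. Qed.
Lemma gen_det (K L : fieldType) (iota : {rmorphism K -> L}) (T : L -> Prop) n
  (M : 'M[L]_n) : mxin iota T M -> gen_subfield iota T (\det M).
Proof.
move=> H; rewrite /determinant; apply: gen_sum => s _; apply: gen_M.
  by apply: gen_X; apply: gen_N; apply: gen_1.
by apply: gen_prod => i _; apply: H.
Qed.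
Lemma mxin_inv (K L : fieldType) (iota : {rmorphism K -> L}) (T : L -> Prop) n
  (M : 'M[L]_n) : mxin iota T M -> mxin iota T (invmx M).
Proof.
move=> H i j; rewrite /invmx; case: ifP => _; last exact: H.
rewrite !mxE; apply: gen_M; first by apply: gen_V; apply: gen_det.
rewrite /cofactor; apply: gen_M; first by apply: gen_X; apply: gen_N; apply: gen_1.
by apply: gen_det => k l; rewrite !mxE; apply: H.
Qed.
Definition frq {L : fieldType} {q : nat} (Hq : [pchar L].-nat q) : L -> L := fun x => x ^+ q.

Lemma frq_zmod (L : fieldType) q (Hq : [pchar L].-nat q) : zmod_morphism (frq Hq).
Proof.
move=> x y; rewrite /frq exprDn_pchar //.
have q0 : (0 < q)%N by case/andP: Hq.
have := exprDn_pchar y (- y) Hq; rewrite subrr expr0n eqn0Ngt q0 /= => /eqP.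
rewrite eq_sym addr_eq0 => /eqP ->; by rewrite opprK.
Qed.
Lemma frq_mon (L : fieldType) q (Hq : [pchar L].-nat q) : monoid_morphism (frq Hq).
Proof. by split; rewrite /frq ?expr1n // => x y; rewrite exprMn. Qed.

HB.instance Definition _ (L : fieldType) q (Hq : [pchar L].-nat q) :=
  GRing.isZmodMorphism.Build L L (frq Hq) (@frq_zmod L q Hq).
HB.instance Definition _ (L : fieldType) q (Hq : [pchar L].-nat q) :=
  GRing.isMonoidMorphism.Build L L (frq Hq) (@frq_mon L q Hq).

Lemma char_setup (K L : fieldType) (F : finFieldType) (f : {rmorphism F -> K})
  (iota : {rmorphism K -> L}) q : #|F| = q ->
  exists p k, [/\ prime p, p \in [pchar L], q = (p ^ k)%N & (0 < k)%N].
Proof.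
move=> cF; have [p pr pF] := finPcharP F.
have pL : p \in [pchar L] by apply: (rmorph_pchar iota); apply: (rmorph_pchar f).
have := abelem_pgroup (fin_ring_pchar_abelem pF); rewrite /pgroup cardsT cF.
case/p_natP=> k qk; exists p, k; split => //.
case: k qk => // qk; have := finNzRing_gt1 F; by rewrite cF qk.
Qed.

Lemma qnat (L : fieldType) p k : p \in [pchar L] -> [pchar L].-nat (p ^ k)%N.
Proof.
move=> pL; rewrite (eq_pnat _ (pcharf_eq pL)) pnatX pnatE ?inE ?eqxx ?orTb //; exact: pcharf_prime pL.
Qed.
Lemma fix_in_K (K L : fieldType) (F : finFieldType) (f : {rmorphism F -> K})
  (iota : {rmorphism K -> L}) q (cF : #|F| = q) (s : L) :
  s ^+ q = s -> exists k, s = iota k.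
Proof.
move=> sq.
case: (boolP (s \in map (fun c => iota (f c)) (enum F))) => [/mapP [c _ ->] | Hn].
  by exists (f c).
exfalso.
have q1 : (1 < q)%N by rewrite -cF finNzRing_gt1.
pose P : {poly L} := 'X^q - 'X.
have sP : size P = q.+1.
  by rewrite /P size_polyDl ?size_polyXn // size_polyN size_polyX ltnS.
have P0 : P != 0 by rewrite -size_poly_eq0 sP.
have := max_poly_roots P0 (rs := s :: map (fun c => iota (f c)) (enum F)).
rewrite sP /= size_map -cardE cF ltnn => H; suff : false by []; apply: H.
  apply/andP; split; first by rewrite /root /P !hornerE sq subrr eqxx.
  apply/allP => _ /mapP [c _ ->]; rewrite /root !hornerE -!rmorphXn -cF expf_card.
  by rewrite subrr.
rewrite Hn map_inj_uniq ?enum_uniq //.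
by move=> c d /fmorph_inj /fmorph_inj.
Qed.
Lemma split_sep (L : fieldType)
  (HL2 : forall p : {poly L}, separable_poly p -> (1 < size p)%N -> exists x, root p x) :
  forall p : {poly L}, separable_poly p ->
  exists rs, [/\ uniq rs, all (root p) rs & size rs = (size p).-1].
Proof.
move=> p; move: {2}(size p) (leqnn (size p)) => m; elim: m p => [|m IH] p Hs Sp.
  by exists [::]; split => //; move: Hs; rewrite leqn0 => /eqP ->.
have [Hs1|Hs1] := leqP (size p) 1.
  by exists [::]; split => //; case: (size p) Hs1 => [|[]].
have [x rx] := HL2 p Sp Hs1.
have [p' Ep] := factor_theorem p x rx.
have p'0 : p' != 0 by apply: contraTneq Hs1 => p'0; rewrite Ep p'0 mul0r size_poly0.
move: Sp; rewrite Ep separable_root => /andP [Sp' nrx].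
have sz : size p = (size p').+1.
  by rewrite Ep size_mul ?polyXsubC_eq0 // size_XsubC addn2.
have Hs' : (size p' <= m)%N by rewrite -ltnS -sz.
have [rs [U A S]] := IH p' Hs' Sp'.
exists (x :: rs); split.
- rewrite /= U andbT; apply: contra nrx => /(allP A); by [].
- rewrite /= /root hornerM hornerXsubC subrr mulr0 eqxx /=; apply/allP => y /(allP A) ry.
  by rewrite /root hornerM (eqP ry) mul0r.
- by rewrite /= S -Ep sz /= prednK // lt0n size_poly_eq0.
Qed.
Lemma sum_size (L : fieldType) q n (c : 'I_n.+1 -> L) : (0 < q)%N ->
  (size ((\sum_(j < n.+1) c j *: 'X^(q ^ j))%R : {poly L}) <= (q ^ n).+1)%N.
Proof.
move=> q0; apply: leq_trans (size_sum _ _ _) _; apply/bigmax_leqP => j _.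
apply: leq_trans (size_scale_leq _ _) _; rewrite size_polyXn ltnS.
by apply: leq_pexp2l => //; rewrite -ltnS.
Qed.

Lemma qR0 (L : fieldType) p k (pL : p \in [pchar L]) j : (0 < k)%N -> (0 < j)%N ->
  ((p ^ k) ^ j)%:R = 0 :> L.
Proof.
move=> k0 j0; rewrite -expnM; have : (0 < k * j)%N by rewrite muln_gt0 k0.
case: (k * j)%N => // t _; by rewrite expnS natrM pcharf0 // mul0r.
Qed.

Lemma polyn0 (L : fieldType) p k (pL : p \in [pchar L]) j (x : {poly L}) :
  (0 < k)%N -> (0 < j)%N -> x *+ ((p ^ k) ^ j) = 0.
Proof.
move=> k0 j0; by rewrite -mulr_natr -(rmorph_nat (@polyC L)) qR0 // mulr0.
Qed.

Lemma P_facts (L : fieldType) p k (pL : p \in [pchar L]) (k0 : (0 < k)%N) (q1 : (1 < p ^ k)%N)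
   n (a : 'I_n.+1 -> L) (a0 : a ord0 != 0) :
  size ('X^((p ^ k) ^ n.+1) - \sum_(j < n.+1) a j *: 'X^((p ^ k) ^ j) : {poly L})
     = ((p ^ k) ^ n.+1).+1 /\
  separable_poly ('X^((p ^ k) ^ n.+1) - \sum_(j < n.+1) a j *: 'X^((p ^ k) ^ j) : {poly L}).
Proof.
have q0 : (0 < p ^ k)%N by apply: ltnW.
split.
  rewrite size_polyDl ?size_polyXn // size_polyN ltnS.
  apply: leq_trans (@sum_size L (p ^ k) n a q0) _.
  change ((p ^ k) ^ n < (p ^ k) ^ n.+1)%N; by rewrite ltn_exp2l.
have dP : ('X^((p ^ k) ^ n.+1) - \sum_(j < n.+1) a j *: 'X^((p ^ k) ^ j) : {poly L})^`()
   = - (a ord0)%:P.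
  rewrite derivB linear_sum /= big_ord_recl /= expn0 derivZ derivXn /=.
  rewrite derivXn polyn0 // sub0r.
  rewrite big1 ?addr0 ?alg_polyC // => j _.
  by rewrite derivZ derivXn polyn0 // scaler0.
rewrite unlock dP -polyCN -alg_polyC coprimepZr ?coprimep1 // oppr_eq0 //.
Qed.

Lemma exists_W (L : fieldType) p k (pL : p \in [pchar L]) (k0 : (0 < k)%N) (q1 : (1 < p ^ k)%N)
  (HL2 : forall P : {poly L}, separable_poly P -> (1 < size P)%N -> exists x, root P x)
  n (a : 'I_n.+1 -> L) (a0 : a ord0 != 0) :
  exists W : 'M[L]_n.+1, W \in unitmx /\ frobmx (p ^ k) W = (Delta a)^T *m W.
Proof.
set q := (p ^ k)%N.
have q0 : (0 < q)%N by apply: ltnW.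
have [sP sepP] := @P_facts L p k pL k0 q1 n a a0.
set P := ('X^(_) - _ : {poly L}) in sP sepP.
have [rs [Urs Ars Srs]] := @split_sep L HL2 _ sepP.
rewrite sP /= in Srs.
pose A := \matrix_(i < size rs, j < n.+1) rs`_i ^+ (q ^ j).
have rankA : \rank A = n.+1.
  apply/eqP; rewrite eqn_leq rank_leq_col /= leqNgt; apply/negP => Hlt.
  have : kermx A^T != 0.
    by rewrite -mxrank_eq0 mxrank_ker mxrank_tr subn_eq0 -ltnNge.
  case/rowV0Pn => v /sub_kermxP vA v0.
  have [j0 vj0] : exists j0, v 0 j0 != 0.
    case: (pickP (fun j => v 0 j != 0)) => [j0 Hj0 | H]; first by exists j0.
    case/eqP: v0; apply/matrixP => i j; rewrite (ord1 i) mxE.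
    by have := H j; move/negbFE/eqP.
  pose Q : {poly L} := \sum_(j < n.+1) v 0 j *: 'X^(q ^ j).
  have Q0 : Q != 0.
    apply/eqP => /(congr1 (fun r : {poly L} => r`_(q ^ j0))); rewrite coef0 coef_sum.
    rewrite (bigD1 j0) //= big1 ?addr0 => [|j jj0]; first by rewrite coefZ coefXn eqxx mulr1; apply/eqP.
    rewrite coefZ coefXn eqn_exp2l // (inj_eq val_inj) eq_sym (negbTE jj0) mulr0 //.
  have rQ : all (root Q) rs.
    apply/allP => x /(nthP 0) [i ilt <-].
    have := congr1 (fun M : 'M[L]_(1, size rs) => M 0 (Ordinal ilt)) vA; rewrite !mxE => E.
    rewrite /root /Q horner_sum; apply/eqP; rewrite -[RHS]E; apply: eq_bigr => j _.
    by rewrite hornerZ hornerXn !mxE.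
  have := max_poly_roots Q0 rQ => /(_ Urs).
  rewrite Srs; move/leq_trans => /(_ _ (@sum_size L q n (fun j => v 0 j) q0)).
  by rewrite ltnS leqNgt ltn_exp2l // ltnSn.
have key : forall r (g : 'I_r -> 'I_(size rs)), r = n.+1 -> row_free (rowsub g A) ->
   exists W : 'M[L]_n.+1, W \in unitmx /\ frobmx q W = (Delta a)^T *m W.
  move=> r g Er; subst r => Hfree.
  exists (rowsub g A)^T; split; first by rewrite unitmx_tr -row_free_unit.
  apply/matrixP => i j; rewrite !mxE.
  have rr : root P rs`_(g j) by apply: (allP Ars); apply: mem_nth.
  rewrite -exprM -expnSr.
  case: (boolP (i.+1 == n.+1)%N) => Hi.
    have Ei : (i : nat) = n by apply/eqP; rewrite -eqSS.
    move: rr; rewrite /root /P hornerD hornerN horner_sum hornerXn subr_eq0 Ei => /eqP ->.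
    apply: eq_bigr => l _; rewrite !mxE Hi hornerZ hornerXn.
    by [].
  have il : (i.+1 < n.+1)%N by rewrite ltn_neqAle Hi ltn_ord.
  rewrite (bigD1 (Ordinal il)) //= big1 ?addr0 => [|l Hl].
    by rewrite !mxE (negbTE Hi) eqxx mul1r.
  rewrite !mxE (negbTE Hi); case: ifP => [/eqP Hli|]; last by rewrite mul0r.
  by case/eqP: Hl; apply: val_inj.
exact: (key _ (maxrankfun A) rankA (maxrowsub_free A)).
Qed.

Lemma pairing (L : fieldType) q (Hq : [pchar L].-nat q) n m m' (D : 'M[L]_n)
  (Y : 'M[L]_(n, m)) (Z : 'M[L]_(n, m')) :
  D *m frobmx q Y = Y -> frobmx q Z = D^T *m Z -> frobmx q (Y^T *m Z) = Y^T *m Z.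
Proof.
move=> HY HZ.
have frE : forall a b (M : 'M[L]_(a, b)), frobmx q M = map_mx (frq Hq) M by [].
by rewrite frE map_mxM -map_trmx -!frE HZ mulmxA -trmx_mul HY.
Qed.

Lemma colM (R : pzRingType) a b c (A : 'M[R]_(a, b)) (B : 'M[R]_(b, c)) j :
  col j (A *m B) = A *m col j B.
Proof. by rewrite !colE mulmxA. Qed.

Lemma exists_W0 (L : fieldType) p k (pL : p \in [pchar L]) (k0 : (0 < k)%N) (q1 : (1 < p ^ k)%N)
  (HL2 : forall P : {poly L}, separable_poly P -> (1 < size P)%N -> exists x, root P x)
  n (a : 'I_n -> L) : Delta a \in unitmx ->
  exists W : 'M[L]_n, W \in unitmx /\ frobmx (p ^ k) W = (Delta a)^T *m W.
Proof.
case: n a => [|n] a Du.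
  exists 1%:M; split; first by rewrite unitmx1.
  by apply/matrixP => i; case: i.
have a0 : a ord0 != 0.
  apply/negP => /eqP a00.
  have := congr1 (row 0) (mulmxV Du); rewrite row_mul.
  have -> : row 0 (Delta a) = 0.
    apply/matrixP => i j; rewrite !mxE; case: ifP => _ //; exact: a00.
  move/(congr1 (fun M : 'M[L]_(1, n.+1) => M 0 0)); rewrite mul0mx !mxE /= => /eqP.
  by rewrite eq_sym oner_eq0.
exact: exists_W.
Qed.

Theorem corollary4p4 (K : fieldType) (q : nat)
  (K_infinite : forall s : seq K, exists x : K, x \notin s)
  (F : finFieldType) (f : {rmorphism F -> K}) (cardF : #|F| = q)
  (n : nat) (B N : 'M[K]_n) (a : 'I_n -> K)
  (HB : B \in unitmx) (HN : N \in unitmx)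
  (HNB : invmx N *m B *m frobmx q N = Delta a)
  (L : fieldType) (iota : {rmorphism K -> L}) (HL : is_sep_closure iota) :
  forall x : L,
    splitting_field_sys iota q B x <-> splitting_field_sys iota q (Delta_star a) x.
Proof.
have [p [k [pr pL qk k0]]] := @char_setup K L F f iota q cardF.
have q1 : (1 < q)%N by rewrite -cardF finNzRing_gt1.
have Hq : [pchar L].-nat q by rewrite qk; exact: qnat.
have frE : forall m m' (M : 'M[L]_(m, m')), frobmx q M = map_mx (frq Hq) M by [].
pose a' := fun i => iota (a i).
have DE : map_mx iota (Delta a) = Delta a'.
  apply/matrixP => i j; rewrite !mxE; case: ifP => _ //.
  by case: ifP => _; rewrite ?rmorph1 ?rmorph0.
have frK : forall m m' (M : 'M[K]_(m, m')), frobmx q (map_mx iota M) = map_mx iota (frobmx q M).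
  by move=> m m' M; apply/matrixP => i j; rewrite !mxE rmorphXn.
set B' := map_mx iota B; set N' := map_mx iota N; set D := Delta a'.
have HNB' : invmx N' *m B' *m frobmx q N' = D.
  by rewrite /N' frK -map_invmx -!map_mxM HNB DE.
have N'u : N' \in unitmx by rewrite map_unitmx.
have fN'u : frobmx q N' \in unitmx by rewrite frE map_unitmx.
have Du : D \in unitmx.
  by rewrite -HNB' !unitmx_mul unitmx_inv N'u fN'u map_unitmx HB.
have DsE : map_mx iota (Delta_star a) = (invmx D)^T by rewrite /Delta_star -map_trmx map_invmx DE.
have [W [Wu HW]] : exists W : 'M[L]_n, W \in unitmx /\ frobmx q W = D^T *m W.
  have q1' : (1 < p ^ k)%N by rewrite -qk.
  rewrite qk; exact: (@exists_W0 L p k pL k0 q1' HL.2 n a' Du).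
set T1 := sol_coords iota q B.
set T2 := sol_coords iota q (Delta a).
set T3 := sol_coords iota q (Delta_star a).
have solT2 : forall m (Y : 'M[L]_(n, m)), D *m frobmx q Y = Y -> mxin iota T2 Y.
  move=> m Y HY i j; apply: gen_base; exists (col j Y); split; last by exists i; rewrite mxE.
  by rewrite DE frE map_col -frE -colM HY.
have solT3 : forall m (Z : 'M[L]_(n, m)), (invmx D)^T *m frobmx q Z = Z -> mxin iota T3 Z.
  move=> m Z HZ i j; apply: gen_base; exists (col j Z); split; last by exists i; rewrite mxE.
  by rewrite DsE frE map_col -frE -colM HZ.
have solT1 : forall m (X : 'M[L]_(n, m)), B' *m frobmx q X = X -> mxin iota T1 X.
  move=> m X HX i j; apply: gen_base; exists (col j X); split; last by exists i; rewrite mxE.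
  by rewrite frE map_col -frE -colM HX.
have fixmx : forall (T : L -> Prop) m m' (M : 'M[L]_(m, m')), frobmx q M = M -> mxin iota T M.
  move=> T m m' M HM i j.
  have : M i j ^+ q = M i j by rewrite -[RHS](congr1 (fun M' : 'M[L]_(m, m') => M' i j) HM) mxE.
  by case/(@fix_in_K K L F f iota q cardF) => c ->; apply: gen_K.
have BN : B' *m frobmx q N' = N' *m D.
  by rewrite -HNB' !mulmxA mulmxV // mul1mx.
have c12 : forall s, T1 s -> gen_subfield iota T2 s.
  move=> s [X [HX [i <-]]].
  have HY : D *m frobmx q (invmx N' *m X) = invmx N' *m X.
    rewrite -HNB' !frE map_mxM -!frE -!mulmxA (mulmxA (frobmx q N')).
    rewrite !frE -map_mxM mulmxV // map_mx1 mul1mx -frE.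
    by move: HX; rewrite -/B' => ->.
  rewrite -(mulKVmx N'u X).
  by apply: mxin_mul; [apply: mxin_map | apply: solT2].
have c21 : forall s, T2 s -> gen_subfield iota T1 s.
  move=> s [Y [HY [i <-]]]; rewrite DE -/D in HY.
  have HX : B' *m frobmx q (N' *m Y) = N' *m Y.
    by rewrite frE map_mxM -!frE mulmxA BN -mulmxA HY.
  rewrite -(mulKmx N'u Y).
  apply: mxin_mul; last by apply: solT1.
  by rewrite /N' -map_invmx; apply: mxin_map.
have WT3 : mxin iota T3 W.
  apply: solT3; by rewrite HW mulmxA -trmx_mul mulmxV // trmx1 mul1mx.
have HV : D *m frobmx q (invmx W)^T = (invmx W)^T.
  have fWu : frobmx q W \in unitmx by rewrite frE map_unitmx.
  have E1 : invmx (frobmx q W) *m D^T = invmx W.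
    by rewrite -[LHS]mulmx1 -(mulmxV Wu) mulmxA -(mulmxA _ D^T W) -HW mulVmx // mul1mx.
  by rewrite frE -map_trmx map_invmx -frE -E1 trmx_mul trmxK.
have VT2 : mxin iota T2 (invmx W)^T by apply: solT2.
have c32 : forall s, T3 s -> gen_subfield iota T2 s.
  move=> s [Z [HZ [i <-]]]; rewrite DsE in HZ.
  have HZ' : frobmx q Z = D^T *m Z.
    by rewrite -[in RHS]HZ mulmxA -trmx_mul mulVmx // trmx1 mul1mx.
  have Vu : ((invmx W)^T)^T \in unitmx by rewrite trmxK unitmx_inv.
  rewrite -(mulKmx Vu Z).
  apply: mxin_mul; first by apply: mxin_inv; apply: mxin_tr.
  apply: fixmx; exact: (@pairing L q Hq _ _ _ D _ _ HV HZ').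
have c23 : forall s, T2 s -> gen_subfield iota T3 s.
  move=> s [Y [HY [i <-]]]; rewrite DE -/D in HY.
  have E : Y i 0 = (Y^T *m W *m invmx W) 0 i by rewrite mulmxK // mxE.
  rewrite E; apply: mxin_mul; last by apply: mxin_inv.
  by apply: fixmx; exact: (@pairing L q Hq _ _ _ D _ _ HY HW).
move=> x; rewrite /splitting_field_sys; split => H.
  exact: (@gen_sub K L iota T2 T3 c23 x (@gen_sub K L iota T1 T2 c12 x H)).
exact: (@gen_sub K L iota T2 T1 c21 x (@gen_sub K L iota T3 T2 c32 x H)).
Qed.
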